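(* Let $(W,S)$ be a Coxeter system with $S$ finite, $\phi:\operatorname{Ad}(Q_W)\to W$ the homomorphism $e_x\mapsto x$, and $C_W=\ker\phi$. Then $C_W$ is a central subgroup of $\operatorname{Ad}(Q_W)$.
   Context: A Coxeter system $(W,S)$: $S$ finite, $m:S\times S\to\mathbb{N}\cup\{\infty\}$ with $m(s,s)=1$, $2\le m(s,t)=m(t,s)\le\infty$ for $s\ne t$, $W=\langle s\in S\mid (st)^{m(s,t)}=1\ (m(s,t)<\infty)\rangle$. The Coxeter quandle is $Q_W=\bigcup_{w\in W}w^{-1}Sw$ with $x\ast y=yxy$, and $\operatorname{Ad}(Q_W)=\langle e_x\ (x\in Q_W)\mid e_y^{-1}e_xe_y=e_{x\ast y}\rangle$; $\phi$ is well defined. *)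

(* Defs.v *)
(* groups given by presentations are
   encoded as words modulo the congruence generated by the relators. *)
From mathcomp Require Import all_boot.
Set Implicit Arguments. Unset Strict Implicit. Unset Printing Implicit Defensive.

Inductive cong (A : Type) (R : seq A -> seq A -> Prop) : seq A -> seq A -> Prop :=
| cong_base u v : R u v -> cong R u v
| cong_refl u : cong R u u
| cong_sym u v : cong R u v -> cong R v u
| cong_trans u v w : cong R u v -> cong R v w -> cong R u w
| cong_ctx a b u v : cong R u v -> cong R (a ++ u ++ b) (a ++ v ++ b).

(* Coxeter matrix: None stands for infinity. *)
Definition coxeter_matrix (S : finType) (m : S -> S -> option nat) : Prop :=
  (forall s, m s s = Some 1%N) /\
  (forall s t, m s t = m t s) /\
  (forall s t k, s <> t -> m s t = Some k -> 2 <= k).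

Definition W_rel (S : finType) (m : S -> S -> option nat) (u v : seq S) : Prop :=
  exists s t k, m s t = Some k /\ u = flatten (nseq k [:: s; t]) /\ v = [::].

Definition weq (S : finType) (m : S -> S -> option nat) : seq S -> seq S -> Prop :=
  cong (W_rel m).

(* A pair (w, s) represents the element w^{-1} s w of Q_W (as a word; the
   inverse of a word in involutive generators is its reverse).  Every
   element of Q_W is of this form. *)
Definition refl_word (S : finType) (p : seq S * S) : seq S := rev p.1 ++ p.2 :: p.1.

(* Quandle operation x * y = y x y on representatives:
   (w'^{-1} s' w')(w^{-1} s w)(w'^{-1} s' w') = u^{-1} s u, u = w w'^{-1} s' w'. *)
Definition qop (S : finType) (p q : seq S * S) : seq S * S :=
  (p.1 ++ refl_word q, p.2).

(* Letters of Ad(Q_W): (representative, sign); sign true = e_x, false = e_x^{-1}. *)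
Definition Ad_rel (S : finType) (m : S -> S -> option nat)
  (u v : seq ((seq S * S) * bool)) : Prop :=
  (exists p b, u = [:: (p, b); (p, ~~ b)] /\ v = [::]) \/
  (* generators indexed by elements of Q_W: e_p = e_q when p, q represent
     the same element of W *)
  (exists p q, weq m (refl_word p) (refl_word q) /\ u = [:: (p, true)] /\ v = [:: (q, true)]) \/
  (exists p q, u = [:: (q, false); (p, true); (q, true)] /\ v = [:: (qop p q, true)]).

Definition adeq (S : finType) (m : S -> S -> option nat) :
  seq ((seq S * S) * bool) -> seq ((seq S * S) * bool) -> Prop := cong (Ad_rel m).

Definition phi (S : finType) (a : seq ((seq S * S) * bool)) : seq S :=
  flatten (map (fun l : (seq S * S) * bool =>
    if l.2 then refl_word l.1 else rev (refl_word l.1)) a).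

(* Main.v *)
Require Import Defs.
From mathcomp Require Import all_boot.
Set Implicit Arguments. Unset Strict Implicit. Unset Printing Implicit Defensive.

Section Aux.
Variable A : Type.
Variable R : seq A -> seq A -> Prop.

Lemma congL (a u v : seq A) : cong R u v -> cong R (a ++ u) (a ++ v).
Proof. move=> h; have := cong_ctx a [::] h; by rewrite !cats0. Qed.

Lemma congR (b u v : seq A) : cong R u v -> cong R (u ++ b) (v ++ b).
Proof. move=> h; exact: (cong_ctx [::] b h). Qed.

Lemma congLR (a b u v : seq A) : cong R u v -> cong R (a ++ u ++ b) (a ++ v ++ b).
Proof. exact: cong_ctx. Qed.
End Aux.

Lemma flat_nseq_comm (T : Type) (x : seq T) k :
  flatten (nseq k x) ++ x = x ++ flatten (nseq k x).
Proof. elim: k => [|k IH] /=; first by rewrite cats0. by rewrite -catA IH. Qed.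

Lemma rev_flat (T : Type) (s t : T) k :
  rev (flatten (nseq k [:: s; t])) = flatten (nseq k [:: t; s]).
Proof.
elim: k => [|k IH] //.
have e : forall (x : seq T) n, flatten (nseq n.+1 x) = x ++ flatten (nseq n x) by [].
by rewrite !e rev_cat IH flat_nseq_comm.
Qed.

Lemma weq_rev (S : finType) (m : S -> S -> option nat) (hm : coxeter_matrix m) u v :
  weq m u v -> weq m (rev u) (rev v).
Proof.
case: hm => _ [hsym _].
elim => {u v}.
- move=> u v [s [t [k [hk [-> ->]]]]]. apply: cong_base.
  exists t, s, k; split; first by rewrite hsym.
  by rewrite rev_flat.
- move=> u; exact: cong_refl.
- move=> u v _ h; exact: cong_sym.
- move=> u v w _ h1 _ h2; exact: cong_trans h1 h2.
- move=> a b u v _ h. rewrite !rev_cat -!catA. exact: cong_ctx.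
Qed.

Lemma weq_ss (S : finType) (m : S -> S -> option nat) (hm : coxeter_matrix m) s :
  weq m [:: s; s] [::].
Proof.
case: hm => h1 _. apply: cong_base. exists s, s, 1; split => //.
Qed.

Lemma weq_wrev (S : finType) (m : S -> S -> option nat) (hm : coxeter_matrix m) w :
  weq m (w ++ rev w) [::].
Proof.
elim: w => [|t w IH] /=; first exact: cong_refl.
rewrite rev_cons -cats1.
apply: (@cong_trans _ _ _ [:: t; t]); last exact: weq_ss hm t.
have := congLR [:: t] [:: t] IH. by rewrite /= -catA.
Qed.

Lemma weq_RR (S : finType) (m : S -> S -> option nat) (hm : coxeter_matrix m) q :
  weq m (refl_word q ++ refl_word q) [::].
Proof.
case: q => w s; rewrite /refl_word /=.
have h1 := congLR (rev w ++ [:: s]) ([:: s] ++ w) (weq_wrev hm w).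
have h2 := congLR (rev w) w (weq_ss hm s).
have h3 := weq_wrev hm (rev w); rewrite revK in h3.
move: h1 h2; rewrite -?catA /= => h1 h2.
rewrite -?catA /=.
exact: cong_trans h1 (cong_trans h2 h3).
Qed.

Lemma rev_refl (S : finType) (q : seq S * S) : rev (refl_word q) = refl_word q.
Proof. by rewrite /refl_word rev_cat rev_cons revK -cats1 -catA. Qed.

Lemma rev_catR (S : finType) (x : seq S) q : rev (x ++ refl_word q) = refl_word q ++ rev x.
Proof. by rewrite rev_cat rev_refl. Qed.

Section Ad.
Variable S : finType.
Variable m : S -> S -> option nat.
Hypothesis hm : coxeter_matrix m.
Notation L := ((seq S * S) * bool)%type.

Lemma ad_cancel (p : seq S * S) b : adeq m [:: (p, b); (p, ~~ b)] [::].
Proof. apply: cong_base; left; by exists p, b. Qed.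

Lemma ad_conj p q : adeq m [:: (q, false); (p, true); (q, true)] [:: (qop p q, true)].
Proof. apply: cong_base; right; right; by exists p, q. Qed.

Lemma ad_eq p q : weq m (refl_word p) (refl_word q) -> adeq m [:: (p, true)] [:: (q, true)].
Proof. move=> h; apply: cong_base; right; left; by exists p, q. Qed.

Lemma step_pos p q : adeq m [:: (p, true); (q, true)] [:: (q, true); (qop p q, true)].
Proof.
apply: cong_trans (congR _ (cong_sym (ad_cancel q true))) _ => /=.
exact: (congL [:: (q, true)] (ad_conj p q)).
Qed.

Lemma step_neg p q : adeq m [:: (p, true); (q, false)] [:: (q, false); (qop p q, true)].
Proof.
set r := qop p q.
have h1 : adeq m [:: (qop r q, true)] [:: (p, true)].
  apply: ad_eq.
  have E : refl_word (qop r q) = [::] ++ (refl_word q ++ refl_word q) ++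
      (rev p.1 ++ p.2 :: p.1 ++ refl_word q ++ refl_word q).
    rewrite {1}/refl_word /r /qop /= !rev_catR -!catA //.
  rewrite E.
  apply: cong_trans (cong_ctx _ _ (weq_RR hm q)) _ => /=.
  have := cong_ctx (rev p.1 ++ p.2 :: p.1) [::] (weq_RR hm q).
  by rewrite !cats0 -!catA.
apply: cong_sym.
have h0 := congL [:: (q, false); (r, true)] (cong_sym (ad_cancel q true)).
have h2 := congR [:: (q, false)] (cong_trans (ad_conj r q) h1).
exact: cong_trans h0 h2.
Qed.

Lemma phi_cons (l : L) a : phi (l :: a) = phi [:: l] ++ phi a.
Proof. by rewrite /phi /= cats0. Qed.

Lemma slide (a : seq L) : forall p, adeq m ((p, true) :: a) (a ++ [:: ((p.1 ++ phi a, p.2), true)]).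
Proof.
elim: a => [|[q b] a IH] p /=.
  rewrite /phi /= cats0; case: p => ??; exact: cong_refl.
have st : adeq m [:: (p, true); (q, b)] [:: (q, b); (qop p q, true)].
  case: b; [exact: step_pos | exact: step_neg].
apply: cong_trans (congR a st) _ => /=.
apply: cong_trans (congL [:: (q, b)] (IH (qop p q))) _ => /=.
rewrite phi_cons /qop /= -catA.
have -> : phi [:: (q, b)] = refl_word q.
  move: b {st}; case; rewrite /phi /= cats0 //; exact: rev_refl.
exact: cong_refl.
Qed.

Lemma comm_letter (a : seq L) : weq m (phi a) [::] ->
  forall l : L, adeq m (a ++ [:: l]) ([:: l] ++ a).
Proof.
move=> ha.
have pos : forall p, adeq m (a ++ [:: (p, true)]) ([:: (p, true)] ++ a).
  move=> p; apply: cong_sym.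
  apply: cong_trans (slide a p) _.
  apply: congL; apply: ad_eq.
  rewrite /refl_word /= rev_cat.
  have hr : weq m (rev (phi a)) [::] by have := weq_rev hm ha.
  have e1 : (rev (phi a) ++ rev p.1) ++ p.2 :: p.1 ++ phi a
     = [::] ++ rev (phi a) ++ ((rev p.1 ++ p.2 :: p.1) ++ phi a) by rewrite /= -!catA.
  rewrite e1; apply: cong_trans (cong_ctx _ _ hr) _ => /=.
  have := cong_ctx (rev p.1 ++ p.2 :: p.1) [::] ha. by rewrite !cats0.
move=> [p b]; case: b; first exact: pos.
apply: cong_trans (congR (a ++ [:: (p, false)]) (cong_sym (ad_cancel p false))) _ => /=.
have h2 := congLR [:: (p, false)] [:: (p, false)] (pos p).
rewrite /= in h2.
have e : [:: (p, false), (p, true) & a ++ [:: (p, false)]] = [:: (p, false)] ++ ([:: (p, true)] ++ a) ++ [:: (p, false)] by [].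
rewrite e; apply: cong_trans (cong_sym (congLR _ _ (pos p))) _.
rewrite /= -catA /=.
have := congL ((p, false) :: a) (ad_cancel p true). by rewrite /= cats0 -cat_cons.
Qed.
End Ad.

Theorem lemma2p5 (S : finType) (m : S -> S -> option nat)
  (hm : coxeter_matrix m) :
  forall a : seq ((seq S * S) * bool), weq m (phi a) [::] ->
  forall b : seq ((seq S * S) * bool), adeq m (a ++ b) (b ++ a).
Proof.
move=> a ha; elim => [|l b IH]; first by rewrite cats0; exact: cong_refl.
have e : a ++ l :: b = (a ++ [:: l]) ++ b by rewrite -catA.
rewrite e; apply: cong_trans (congR b (comm_letter hm ha l)) _ => /=.
exact: (congL [:: l] IH).
Qed.
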